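(* Let $d=2\delta$ be even, $H\ge1$, $T_{\max}\ge2$. Let $\mu\in\mathbb{C}^\delta$ with $|\mu_k|=1$ and $\lambda=(\mu_1,\bar\mu_1,\dots,\mu_\delta,\bar\mu_\delta)\in\mathbb{C}^d$, and $e_t=\lambda^{t-1}$. Let the parameters satisfy, for every $T\in\{2,\dots,T_{\max}\}$, $P_{T-1,T-1}=-1$, $P_{T-1,T}=2$, $P_{T-1,t}=0$ for $t\le T-2$, and $\mathtt{B}^\top\mathtt{A}=\frac12\mathrm{diag}(J,\dots,J)$ (block diagonal with $\delta$ blocks), where $J\in\mathbb{R}^{2\times2}$ has all entries equal to $1$. Then $\mathcal{T}_\theta(e_{1:T})=\lambda^T$ for every $T\in\{2,\dots,T_{\max}\}$; in particular the loss in the orthogonal setting vanishes, and $H=\delta$ heads suffice to achieve this.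
   Context: Model: parameters $\mathtt{A},\mathtt{B}\in\mathbb{R}^{H\times d}$ with rows $a_h,b_h\in\mathbb{R}^d$ and $P\in\mathbb{R}^{T_{\max}\times T_{\max}}$; $\mathcal{T}_\theta(e_{1:T})=\sum_{h=1}^H\sum_{t=1}^T P_{T-1,t}\langle e_t,\mathrm{diag}(a_h)e_{T-1}\rangle_{\mathbb{C}}\mathrm{diag}(b_h)e_t$ with $\langle x,y\rangle_{\mathbb{C}}=\sum_i x_i\bar y_i$. Orthogonal setting loss: $\ell(\theta)=\sum_{T=2}^{T_{\max}}\mathbb{E}\|\mathcal{T}_\theta(e_{1:T})-\lambda^T\|^2$ where $\mu$ has i.i.d. coordinates uniform on the unit circle. Powers are coordinatewise. *)

(* Defs.v *)
From HB Require Import structures.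
From mathcomp Require Import all_boot all_order all_algebra.
From mathcomp Require Export complex.
Set Implicit Arguments. Unset Strict Implicit. Unset Printing Implicit Defensive.
Import Order.TTheory GRing.Theory Num.Theory.
Local Open Scope ring_scope.

Section Defs.
Variable R : rcfType.
Local Notation C := R[i].

Lemma half_ord_lt (delta : nat) (i : 'I_(delta.*2)) : (i./2 < delta)%N.
Proof. by rewrite ltn_half_double. Qed.

Definition blk (delta : nat) (i : 'I_(delta.*2)) : 'I_delta :=
  Ordinal (half_ord_lt i).

(* lambda = (mu_1, conj mu_1, ..., mu_delta, conj mu_delta) (0-based coordinates:
   even coordinate 2k -> mu_k, odd coordinate 2k+1 -> conj mu_k) *)
Definition lam (delta : nat) (mu : 'I_delta -> C) (i : 'I_(delta.*2)) : C :=
  if odd i then conjc (mu (blk i)) else mu (blk i).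

Definition tok (delta : nat) (mu : 'I_delta -> C) (t : nat) (i : 'I_(delta.*2)) : C :=
  lam mu i ^+ t.-1.

Definition cdot (d : nat) (x y : 'I_d -> C) : C := \sum_(i < d) x i * conjc (y i).

(* 1-based access P_{i,j} to a T_max x T_max matrix (0 outside the range) *)
Definition Pe (n : nat) (P : 'M[R]_n) (i j : nat) : R :=
  match insub i.-1, insub j.-1 with
  | Some a, Some b => P a b
  | _, _ => 0
  end.

(* T_theta(e_{1:T}) = sum_h sum_{t=1}^T P_{T-1,t} <e_t, diag(a_h) e_{T-1}>_C diag(b_h) e_t,
   a_h, b_h the rows of A, B; returned coordinatewise *)
Definition model (H d n : nat) (A B : 'M[R]_(H, d)) (P : 'M[R]_n)
    (e : nat -> 'I_d -> C) (T : nat) (i : 'I_d) : C :=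
  \sum_(h < H) \sum_(1 <= t < T.+1)
     (Pe P T.-1 t)%:C%C * cdot (e t) (fun j => (A h j)%:C%C * e T.-1 j)
       * ((B h i)%:C%C * e t i).

Definition halfBlockJ (delta : nat) : 'M[R]_(delta.*2) :=
  \matrix_(i, j) (if blk i == blk j then 2^-1 else 0).

End Defs.

(* Main.v *)
Require Import Defs.
From HB Require Import structures.
From mathcomp Require Import all_boot all_order all_algebra.
From mathcomp Require Import complex.
From mathcomp Require Import zify ring.
Import Order.TTheory GRing.Theory Num.Theory.
Local Open Scope ring_scope.

Section S.
Variable R : rcfType.
Variable delta : nat.
Variable mu : 'I_delta -> R[i].
Hypothesis hmu : forall k, `|mu k| = 1.

Lemma muJ k : mu k * (mu k)^*%C = 1.
Proof. by rewrite -sqr_normc hmu expr1n. Qed.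

Lemma lamJ i : lam mu i * (lam mu i)^*%C = 1.
Proof. rewrite /lam; case: ifP => _; last exact: muJ.
by rewrite conjcK mulrC muJ. Qed.

Lemma lam_sum i : lam mu i * (mu (blk i) + (mu (blk i))^*%C) = lam mu i ^+ 2 + 1.
Proof. rewrite /lam; case: ifP => _; rewrite mulrDr expr2 ?muJ; last by [].
by rewrite mulrC muJ addrC. Qed.

Lemma j0_lt (k : 'I_delta) : (k.*2 < delta.*2)%N.
Proof. by rewrite ltn_double. Qed.
Lemma j1_lt (k : 'I_delta) : (k.*2.+1 < delta.*2)%N.
Proof. have := ltn_ord k; rewrite -!muln2; lia. Qed.
Definition j0 (k : 'I_delta) : 'I_(delta.*2) := Ordinal (j0_lt k).
Definition j1 (k : 'I_delta) : 'I_(delta.*2) := Ordinal (j1_lt k).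

Lemma blk0 k : blk (j0 k) = k.
Proof. apply: val_inj => /=; by rewrite doubleK. Qed.
Lemma blk1 k : blk (j1 k) = k.
Proof. apply: val_inj => /=; by rewrite uphalf_double. Qed.

Lemma sum_blk (k : 'I_delta) (F : 'I_(delta.*2) -> R[i]) :
  \sum_j (if blk j == k then F j else 0) = F (j0 k) + F (j1 k).
Proof.
rewrite (bigD1 (j0 k)) //= blk0 eqxx (bigD1 (j1 k)) /=; last first.
  apply/eqP => /(congr1 val) /=; rewrite -!muln2; lia.
rewrite blk1 eqxx big1 ?addr0 //.
move=> j /andP[nj1 nj0]; case: eqP => // ek; exfalso.
have ej : nat_of_ord j = (odd j + (j./2).*2)%N by rewrite odd_double_half.
have ejk : j./2 = k by rewrite -ek.
move: ej; rewrite ejk; case: (odd j) => /= ej.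
  by move: nj0; rewrite (_ : j = j1 k) ?eqxx //; apply: val_inj; rewrite /= ej.
by move: nj1; rewrite (_ : j = j0 k) ?eqxx //; apply: val_inj; rewrite /= ej.
Qed.

Lemma cJM (x : R) (y : R[i]) : (x%:C%C * y)^*%C = x%:C%C * y^*%C.
Proof. by rewrite rmorphM; congr (_ * _); exact: conjc_real. Qed.

Lemma lam0 k : lam mu (j0 k) = mu k.
Proof. by rewrite /lam /= odd_double blk0. Qed.
Lemma lam1 k : lam mu (j1 k) = (mu k)^*%C.
Proof. by rewrite /lam /= odd_double blk1. Qed.


Lemma main (H Tmax : nat) (A B : 'M[R]_(H, delta.*2)) (P : 'M[R]_Tmax) :
  (forall T : nat, (2 <= T <= Tmax)%N ->
     [/\ Pe P T.-1 T.-1 = -1, Pe P T.-1 T = 2 &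
         forall t : nat, (1 <= t <= T - 2)%N -> Pe P T.-1 t = 0]) ->
  B^T *m A = halfBlockJ R delta ->
  forall T : nat, (2 <= T <= Tmax)%N ->
     forall i, model A B P (tok mu) T i = lam mu i ^+ T.
Proof.
move=> hP hBA T hT i; have [p1 p2 p0] := hP T hT.
case/andP: hT; case: T p1 p2 p0 => [|[|n]] //= p1 p2 p0 _ _.
rewrite /model.
set l := lam mu i.
pose c1 h := \sum_j ((A h j)%:C%C : R[i]).
pose c2 h := \sum_j ((A h j)%:C%C : R[i]) * lam mu j.
transitivity (\sum_(h < H) (- c1 h * ((B h i)%:C%C * l ^+ n) + 2 * c2 h * ((B h i)%:C%C * l ^+ n.+1))).
  apply: eq_bigr => h _.
  rewrite big_nat_recr //= big_nat_recr //= p1 p2.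
  rewrite [X in X + _ + _]big_nat big1 ?add0r; last first.
    move=> t /andP[ht1 ht2]; rewrite p0 ?rmorph0 ?mul0r //.
    apply/andP; split; lia.
  have cd1 : cdot (tok mu n.+1) (fun j => (A h j)%:C%C * tok mu n.+1 j) = c1 h.
    rewrite /cdot /tok /=; apply: eq_bigr => j _.
    by rewrite cJM rmorphXn mulrCA -exprMn lamJ expr1n mulr1.
  have cd2 : cdot (tok mu n.+2) (fun j => (A h j)%:C%C * tok mu n.+1 j) = c2 h.
    rewrite /cdot /tok /=; apply: eq_bigr => j _.
    rewrite cJM rmorphXn mulrCA exprS -mulrA -exprMn lamJ expr1n mulr1.
    by rewrite mulrC.
  rewrite cd1 cd2 /tok /= rmorphN rmorph1 mulN1r.
  by rewrite (_ : (2 : R)%:C%C = 2) // rmorph_nat.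
pose G j := - l ^+ n + 2 * lam mu j * l ^+ n.+1.
transitivity (\sum_(h < H) \sum_j (B h i)%:C%C * (A h j)%:C%C * G j).
  apply: eq_bigr => h _.
  rewrite /c1 /c2 /G mulNr mulr_suml -sumrN mulr_sumr mulr_suml -big_split /=.
  by apply: eq_bigr => j _; ring.
rewrite exchange_big /=.
transitivity (\sum_j (if blk j == blk i then (2^-1 : R)%:C%C * G j else 0)).
  apply: eq_bigr => j _.
  rewrite -mulr_suml.
  have -> : \sum_(h < H) (B h i)%:C%C * (A h j)%:C%C = ((B^T *m A) i j)%:C%C.
    by rewrite mxE rmorph_sum; apply: eq_bigr => h _; rewrite mxE rmorphM.
  rewrite hBA mxE eq_sym; case: ifP => _ //; by rewrite rmorph0 mul0r.
rewrite sum_blk /G lam0 lam1.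
have e := lam_sum i; rewrite -/l in e.
rewrite fmorphV rmorph_nat.
transitivity (l ^+ n * (l * (mu (blk i) + (mu (blk i))^*%C)) - l ^+ n).
  rewrite exprS; move: (l ^+ n) (mu (blk i)) ((mu (blk i))^*%C) => a m c.
  by field.
transitivity (l ^+ n * (l ^+ 2 + 1) - l ^+ n); first by rewrite -e.
by rewrite !exprS; move: (l ^+ n) => a; ring.
Qed.
End S.

Theorem lemma4 (R : rcfType) (delta H Tmax : nat)
    (A B : 'M[R]_(H, delta.*2)) (P : 'M[R]_Tmax) (mu : 'I_delta -> R[i]) :
  (1 <= H)%N -> (2 <= Tmax)%N ->
  (forall k, `|mu k| = 1) ->
  (forall T : nat, (2 <= T <= Tmax)%N ->
     [/\ Pe P T.-1 T.-1 = -1, Pe P T.-1 T = 2 &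
         forall t : nat, (1 <= t <= T - 2)%N -> Pe P T.-1 t = 0]) ->
  B^T *m A = halfBlockJ R delta ->
  (forall T : nat, (2 <= T <= Tmax)%N ->
     forall i, model A B P (tok mu) T i = lam mu i ^+ T)
  /\
  (exists A' B' : 'M[R]_(delta, delta.*2),
     B'^T *m A' = halfBlockJ R delta /\
     forall T : nat, (2 <= T <= Tmax)%N ->
       forall i, model A' B' P (tok mu) T i = lam mu i ^+ T).
Proof.
move=> _ _ hmu hP hBA; split; first exact: main.
pose A' : 'M[R]_(delta, delta.*2) := \matrix_(k, j) (if blk j == k then 1 else 0).
pose B' : 'M[R]_(delta, delta.*2) := \matrix_(k, j) (if blk j == k then 2^-1 else 0).
have hBA' : B'^T *m A' = halfBlockJ R delta.
  apply/matrixP => i j; rewrite !mxE (bigD1 (blk i)) //= !mxE eqxx big1 ?addr0.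
    by rewrite eq_sym; case: ifP; rewrite ?mulr1 ?mulr0.
  by move=> k nk; rewrite !mxE eq_sym (negbTE nk) mul0r.
exists A', B'; split => //; exact: main.
Qed.
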